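(* Let $q$ be a prime power, $n\geq 1$, and $c\in\mathbb{F}_q\setminus\{1\}$. Let $f_1,\ldots,f_n:\mathbb{F}_q\to\mathbb{F}_q$ be functions with $c$-differential uniformities $\delta_1,\ldots,\delta_n$ respectively. Let $\{\beta_1,\ldots,\beta_n\}$ be a basis of $\mathbb{F}_{q^n}$ over $\mathbb{F}_q$, let $A$ be the $n\times n$ matrix with $(i,j)$ entry $\beta_i^{q^{j-1}}$, write $A^{-1}=(a_{i,j})_{i,j}$, and for $1\leq k\leq n$ let $L_k(x)=\sum_{i=1}^n a_{i,k}x^{q^{i-1}}$. Then $F:\mathbb{F}_{q^n}\to\mathbb{F}_{q^n}$, $F(x)=\sum_{k=1}^n\beta_k f_k(L_k(x))$, has $c$-differential uniformity equal to $\prod_{i=1}^n\delta_i$.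
   Context: For a finite field $K$, a function $h:K\to K$ and $c\in K$, let ${}_c\Delta_h(a,b)=\#\{x\in K: h(x+a)-ch(x)=b\}$ and the $c$-differential uniformity is $\delta_{h,c}=\max\{{}_c\Delta_h(a,b): a,b\in K,\ a\neq 0\text{ if } c=1\}$. The matrix $A$ is nonsingular, and $L_k(\sum_i\beta_ix_i)=x_k$ for $x_i\in\mathbb{F}_q$. *)

(* Defs.v *)
From HB Require Import structures.
From mathcomp Require Import all_boot all_order all_algebra all_field.
Set Implicit Arguments. Unset Strict Implicit. Unset Printing Implicit Defensive.
Import Order.TTheory GRing.Theory.
Local Open Scope ring_scope.

Definition cDelta (T : finFieldType) (h : T -> T) (c a b : T) : nat :=
  #|[set x : T | h (x + a) - c * h x == b]|.

Definition cdu (T : finFieldType) (h : T -> T) (c : T) : nat :=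
  \max_(ab : T * T | (c != 1) || (ab.1 != 0)) cDelta h c ab.1 ab.2.

Definition is_basis (K L : finFieldType) (iota : {rmorphism K -> L}) (n : nat)
    (beta : 'I_n -> L) : Prop :=
  (forall v : 'I_n -> K, \sum_(i < n) iota (v i) * beta i = 0 -> forall i, v i = 0)
  /\ (forall x : L, exists v : 'I_n -> K, x = \sum_(i < n) iota (v i) * beta i).

(* A_{i,j} = beta_i ^ (q^j), 0-indexed, q = #|K| *)
Definition basisA (K L : finFieldType) (n : nat) (beta : 'I_n -> L) : 'M[L]_n :=
  \matrix_(i < n, j < n) beta i ^+ (#|K| ^ j)%N.

Definition Lmap (K L : finFieldType) (n : nat) (beta : 'I_n -> L) (k : 'I_n) (x : L) : L :=
  \sum_(i < n) (invmx (basisA K beta)) i k * x ^+ (#|K| ^ i)%N.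

(* preimage in K of an element of L under iota (default 0 if not in the image) *)
Definition pull (K L : finFieldType) (iota : {rmorphism K -> L}) (y : L) : K :=
  odflt 0 [pick z : K | iota z == y].

Definition Fmap (K L : finFieldType) (iota : {rmorphism K -> L}) (n : nat)
    (beta : 'I_n -> L) (f : 'I_n -> K -> K) (x : L) : L :=
  \sum_(k < n) beta k * iota (f k (pull iota (Lmap K beta k x))).

(* Main.v *)
Require Import Defs.
From HB Require Import structures.
From mathcomp Require Import all_boot all_order all_algebra all_field.
From mathcomp Require Import pgroup abelian.
Set Implicit Arguments. Unset Strict Implicit. Unset Printing Implicit Defensive.
Import Order.TTheory GRing.Theory.
Local Open Scope ring_scope.

Lemma pnat_q (K L : finFieldType) (iota : {rmorphism K -> L}) j :
  ([pchar L]).-nat (#|K| ^ j)%N.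
Proof.
have [p pp pK] := finPcharP K.
have pL : p \in [pchar L] := rmorph_pchar iota pK.
have hK : p.-nat #|K|.
  by rewrite -cardsT; exact: (abelem_pgroup (fin_ring_pchar_abelem pK)).
apply: (@sub_in_pnat p) => [r _ /eqnP -> //|].
by rewrite pnatX hK.
Qed.

Lemma frobD (K L : finFieldType) (iota : {rmorphism K -> L}) j (x y : L) :
  (x + y) ^+ (#|K| ^ j)%N = x ^+ (#|K| ^ j)%N + y ^+ (#|K| ^ j)%N.
Proof. exact: exprDn_pchar (pnat_q iota j). Qed.

Lemma frob_sum (K L : finFieldType) (iota : {rmorphism K -> L}) j (I : Type) (r : seq I) (F : I -> L) :
  (\sum_(i <- r) F i) ^+ (#|K| ^ j)%N = \sum_(i <- r) F i ^+ (#|K| ^ j)%N.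
Proof.
apply: (big_morph (fun x : L => x ^+ (#|K| ^ j)%N)).
  by move=> x y; apply: frobD iota j x y.
rewrite expr0n expn_eq0; case: eqP => // h; have := finNzRing_gt1 K; by rewrite h.
Qed.

Lemma frob_K (K : finFieldType) j (a : K) : a ^+ (#|K| ^ j)%N = a.
Proof.
elim: j => [|j IH]; first by rewrite expn0 expr1.
by rewrite expnSr exprM IH expf_card.
Qed.

Lemma frob_iota (K L : finFieldType) (iota : {rmorphism K -> L}) j (a : K) :
  iota a ^+ (#|K| ^ j)%N = iota a.
Proof. by rewrite -rmorphXn frob_K. Qed.

Definition Emap (K L : finFieldType) (iota : {rmorphism K -> L}) (n : nat)
  (beta : 'I_n -> L) (v : {ffun 'I_n -> K}) : L := \sum_(i < n) iota (v i) * beta i.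

Lemma E_surj (K L : finFieldType) (iota : {rmorphism K -> L}) (n : nat)
  (beta : 'I_n -> L) (hbeta : is_basis iota beta) (x : L) :
  exists v, x = Emap iota beta v.
Proof.
have [v ->] := hbeta.2 x; exists [ffun i => v i].
by apply: eq_bigr => i _; rewrite ffunE.
Qed.

Lemma E_inj (K L : finFieldType) (iota : {rmorphism K -> L}) (n : nat)
  (beta : 'I_n -> L) (hbeta : is_basis iota beta) : injective (Emap iota beta).
Proof.
move=> v w h; apply/ffunP => i; apply/eqP; rewrite -subr_eq0; apply/eqP.
apply: (hbeta.1 (fun i => v i - w i)).
rewrite (eq_bigr (fun i => iota (v i) * beta i - iota (w i) * beta i)).
  by rewrite sumrB -/(Emap _ _ v) h subrr.
by move=> j _; rewrite rmorphB mulrBl.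
Qed.

Lemma unitA (K L : finFieldType) (iota : {rmorphism K -> L}) (n : nat)
  (hn : (1 <= n)%N) (hL : #|L| = (#|K| ^ n)%N)
  (beta : 'I_n -> L) (hbeta : is_basis iota beta) : basisA K beta \in unitmx.
Proof.
set q := #|K|.
have q1 : (1 < q)%N := finNzRing_gt1 K.
rewrite unitmxE unitfE -det_tr; apply/negP => /det0P [w wn0 hw].
have hw' i : \sum_(j < n) w 0 j * beta i ^+ (q ^ j)%N = 0.
  transitivity ((w *m (basisA K beta)^T) 0 i); last by rewrite hw mxE.
  by rewrite !mxE; apply: eq_bigr => j _; rewrite !mxE.
pose P : {poly L} := \sum_(j < n) w 0 j *: 'X^(q ^ j)%N.
have [j0 hj0] : exists j0, w 0 j0 != 0.
  case: (pickP (fun j => w 0 j != 0)) => [j0 h | h]; first by exists j0.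
  case/eqP: wn0; apply/rowP => k; rewrite !mxE; apply/eqP/negbFE/h.
have Pn0 : P != 0.
  apply/eqP => /(congr1 (fun p : {poly L} => p`_(q ^ j0)%N)).
  rewrite coef_sumMXn coef0 (eq_bigl (pred1 j0)) ?big_pred1_eq.
    by move/eqP; rewrite (negbTE hj0).
  by move=> j /=; rewrite eqn_exp2l.
have Proot : all (root P) (enum L).
  apply/allP => x _; rewrite rootE.
  have [v ->] := E_surj hbeta x.
  rewrite horner_sum.
  under eq_bigr => j _ do rewrite hornerZ hornerXn /Emap (frob_sum iota) mulr_sumr.
  rewrite exchange_big /=; apply/eqP/big1 => i _.
  transitivity (iota (v i) * \sum_(j < n) w 0 j * beta i ^+ (q ^ j)%N); last by rewrite hw' mulr0.
  rewrite mulr_sumr; apply: eq_bigr => j _.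
  by rewrite exprMn frob_iota mulrCA.
have Psize : (size P <= (q ^ n.-1).+1)%N.
  apply: leq_trans (size_sum _ _ _) _; apply/bigmax_leqP => j _.
  apply: leq_trans (size_scale_leq _ _) _; rewrite size_polyXn ltnS leq_exp2l //.
  by rewrite -ltnS (prednK hn).
have := max_poly_roots Pn0 Proot (enum_uniq _).
rewrite -cardE hL => h; have := leq_trans h Psize.
rewrite -(prednK hn) expnS /= ltnS.
have : (0 < q ^ n.-1)%N by rewrite expn_gt0 ltnW.
move: (q ^ n.-1)%N => m m0; rewrite leqNgt; case/negP.
by rewrite -[X in (X < _)%N]mul1n ltn_mul2r m0.
Qed.
Lemma Lmap_E (K L : finFieldType) (iota : {rmorphism K -> L}) (n : nat)
  (hn : (1 <= n)%N) (hL : #|L| = (#|K| ^ n)%N)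
  (beta : 'I_n -> L) (hbeta : is_basis iota beta) (v : {ffun 'I_n -> K}) k :
  Lmap K beta k (Emap iota beta v) = iota (v k).
Proof.
set A := basisA K beta.
have uA : A \in unitmx := unitA hn hL hbeta.
pose X : 'rV[L]_n := \row_j (Emap iota beta v) ^+ (#|K| ^ j)%N.
pose V : 'rV[L]_n := \row_i iota (v i).
have XV : X = V *m A.
  apply/rowP => j; rewrite !mxE /Emap (frob_sum iota); apply: eq_bigr => i _.
  by rewrite !mxE exprMn frob_iota.
transitivity ((X *m invmx A) 0 k); last by rewrite XV mulmxK // mxE.
rewrite /Lmap mxE; apply: eq_bigr => i _; by rewrite !mxE mulrC.
Qed.

Lemma pull_iota (K L : finFieldType) (iota : {rmorphism K -> L}) (a : K) :
  pull iota (iota a) = a.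
Proof.
rewrite /pull; case: pickP => [z /eqP h | h] /=; first exact: fmorph_inj h.
by have := h a; rewrite eqxx.
Qed.

Lemma Fmap_E (K L : finFieldType) (iota : {rmorphism K -> L}) (n : nat)
  (hn : (1 <= n)%N) (hL : #|L| = (#|K| ^ n)%N)
  (beta : 'I_n -> L) (hbeta : is_basis iota beta) (f : 'I_n -> K -> K) v :
  Fmap iota beta f (Emap iota beta v) = Emap iota beta [ffun k => f k (v k)].
Proof.
rewrite /Fmap /Emap; apply: eq_bigr => k _.
by rewrite (Lmap_E hn hL hbeta) pull_iota ffunE mulrC.
Qed.

Lemma E_add (K L : finFieldType) (iota : {rmorphism K -> L}) (n : nat)
  (beta : 'I_n -> L) v w :
  Emap iota beta v + Emap iota beta w = Emap iota beta [ffun k => v k + w k].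
Proof.
rewrite /Emap -big_split; apply: eq_bigr => k _.
by rewrite ffunE rmorphD mulrDl.
Qed.

Lemma E_sub (K L : finFieldType) (iota : {rmorphism K -> L}) (n : nat)
  (beta : 'I_n -> L) c v w :
  Emap iota beta v - iota c * Emap iota beta w = Emap iota beta [ffun k => v k - c * w k].
Proof.
rewrite /Emap mulr_sumr -sumrB; apply: eq_bigr => k _.
by rewrite ffunE rmorphB rmorphM mulrBl mulrA.
Qed.

Lemma cDelta_E (K L : finFieldType) (iota : {rmorphism K -> L}) (n : nat)
  (hn : (1 <= n)%N) (hL : #|L| = (#|K| ^ n)%N)
  (beta : 'I_n -> L) (hbeta : is_basis iota beta) (f : 'I_n -> K -> K) c va vb :
  cDelta (Fmap iota beta f) (iota c) (Emap iota beta va) (Emap iota beta vb)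
  = (\prod_(k < n) cDelta (f k) c (va k) (vb k))%N.
Proof.
pose S k := [pred y | f k (y + va k) - c * f k y == vb k].
transitivity #|Emap iota beta @: family S|.
  rewrite /cDelta; apply: eq_card => x; rewrite inE.
  have [v ->] := E_surj hbeta x.
  rewrite mem_imset; last exact: E_inj hbeta.
  rewrite E_add !(Fmap_E hn hL hbeta) E_sub (inj_eq (E_inj hbeta)).
  apply/eqP/familyP => [h k | h]; last first.
    by apply/ffunP => k; rewrite !ffunE; apply/eqP; have := h k; rewrite inE.
  by rewrite inE; move/ffunP: h => /(_ k); rewrite !ffunE => ->.
rewrite card_imset; last exact: E_inj hbeta.
rewrite card_family foldrE big_map big_enum /=.
by apply: eq_bigr => k _; apply: eq_card => y; rewrite inE.
Qed.
Lemma cdu_eq (T : finFieldType) (h : T -> T) (c : T) (hc : c != 1) :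
  cdu h c = (\max_(ab : T * T) cDelta h c ab.1 ab.2)%N.
Proof. by rewrite /cdu; apply: eq_bigl => ab; rewrite hc. Qed.

Theorem theorem3p1 (K L : finFieldType) (iota : {rmorphism K -> L}) (n : nat)
  (hn : (1 <= n)%N) (hL : #|L| = (#|K| ^ n)%N)
  (c : K) (hc : c != 1) (f : 'I_n -> K -> K)
  (beta : 'I_n -> L) (hbeta : is_basis iota beta) :
  cdu (Fmap iota beta f) (iota c) = (\prod_(i < n) cdu (f i) c)%N.
Proof.
have hc' : iota c != 1 by rewrite fmorph_eq1.
rewrite cdu_eq //.
under [RHS]eq_bigr => i _ do rewrite cdu_eq //.
apply/eqP; rewrite eqn_leq; apply/andP; split.
  apply/bigmax_leqP => [[a b]] _ /=.
  have [va ->] := E_surj hbeta a; have [vb ->] := E_surj hbeta b.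
  rewrite (cDelta_E hn hL hbeta); apply: leq_prod => k _.
  exact: (@leq_bigmax _ (fun ab : K * K => cDelta (f k) c ab.1 ab.2) (va k, vb k)).
pose ab k := [arg max_(ab > (0, 0) : K * K) cDelta (f k) c ab.1 ab.2].
pose va := [ffun k => (ab k).1]; pose vb := [ffun k => (ab k).2].
apply: leq_trans (@leq_bigmax _ (fun ab : L * L => cDelta (Fmap iota beta f) (iota c) ab.1 ab.2) (Emap iota beta va, Emap iota beta vb)) => /=.
rewrite (cDelta_E hn hL hbeta) leq_eqVlt; apply/orP; left; apply/eqP.
apply: eq_bigr => k _; rewrite !ffunE.
by rewrite (bigop.bigmax_eq_arg ((0, 0) : K * K)).
Qed.
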